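(* For any weighted undirected graph $G=(V,E,w)$, let $\mathcal T_{\mathrm{bal}}$ be any HC-tree obtained by the recursive $\frac13$-balanced min-cut procedure on $G$. Then $C_G(\mathcal T_{\mathrm{bal}})\le 9\cdot\mathrm{OPT}(G)$.
   Context: Let $G=(V,E,w)$ be an undirected graph with nonnegative edge weights. A hierarchical clustering tree (HC-tree) of $G$ is a rooted tree $\mathcal T$ whose leaves are in bijection with $V$. For a node $z$, $\mathcal T[z]$ is the subtree rooted at $z$ and $\mathrm{leaves}(\mathcal T[z])$ its set of leaves; $u\vee v$ is the lowest common ancestor of $u,v$. The cost is $C_G(\mathcal T)=\sum_{(u,v)\in E} w(u,v)\,|\mathrm{leaves}(\mathcal T[u\vee v])|$ and $\mathrm{OPT}(G)=\min_{\mathcal T}C_G(\mathcal T)$. For disjoint $A,B\subseteq V$, $w(A,B)$ is the total weight of edges between $A$ and $B$. If $\mathcal T$ is binary and $z$ is internal with children $z_1,z_2$, $|\mathrm{leaves}(\mathcal T[z_1])|\le|\mathrm{leaves}(\mathcal T[z_2])|$, then $\mathrm{cut}(\mathcal T[z])=(\mathrm{leaves}(\mathcal T[z_1]),\mathrm{leaves}(\mathcal T[z_2]))$. A pair of disjoint sets $(A,B)$ is $\beta$-balanced if $\max\{|A|,|B|\}\le(1-\beta)|A\cup B|$. The recursive $\beta$-balanced min-cut procedure produces a binary HC-tree in which, for every internal node $z$ with $S=\mathrm{leaves}(\mathcal T[z])$, the partition $\mathrm{cut}(\mathcal T[z])=(A,B)$ of $S$ is $\beta$-balanced and minimizes $w(A,B)$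 among all $\beta$-balanced partitions of $S$ into two parts (ties broken arbitrarily). *)

(* Defs.v *)
From HB Require Import structures.
From mathcomp Require Import all_boot all_order all_algebra.
Set Implicit Arguments. Unset Strict Implicit. Unset Printing Implicit Defensive.
Import Order.TTheory GRing.Theory Num.Theory.
Local Open Scope ring_scope.

Section HC.
Variable V : finType.

Inductive hctree : Type :=
| HLeaf of V
| HNode of seq hctree.

Fixpoint leaves (t : hctree) : seq V :=
  match t with
  | HLeaf v => [:: v]
  | HNode cs => flatten (map leaves cs)
  end.

(* Every internal node has at least one child (so leaves are exactly HLeaf's). *)
Fixpoint wf_tree (t : hctree) : bool :=
  match t with
  | HLeaf _ => true
  | HNode cs => (0 < size cs)%N && all wf_tree cs
  end.

Definition is_hctree (t : hctree) : Prop :=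
  [/\ wf_tree t, uniq (leaves t) & forall v : V, v \in leaves t].

Definition leafset (t : hctree) : {set V} := [set x in leaves t].

(* Number of leaves of the subtree rooted at the lowest common ancestor of
   the elements of S (S assumed contained in the leaves of t). *)
Fixpoint lca_size (S : {set V}) (t : hctree) : nat :=
  match t with
  | HLeaf _ => 1%N
  | HNode cs =>
      let fix go (l : seq hctree) : nat :=
        match l with
        | [::] => size (leaves t)
        | c :: l' => if S \subset leafset c then lca_size S c else go l'
        end
      in go cs
  end.

Variable R : realFieldType.

Definition wgraph (E : {set {set V}}) (w : {set V} -> R) : Prop :=
  (forall e, e \in E -> #|e| = 2%N) /\ (forall e, e \in E -> 0 <= w e).

Definition hc_cost (E : {set {set V}}) (w : {set V} -> R) (t : hctree) : R :=
  \sum_(e in E) w e * (lca_size e t)%:R.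

Definition cut_weight (E : {set {set V}}) (w : {set V} -> R) (A B : {set V}) : R :=
  \sum_(e in E | (e :&: A != set0) && (e :&: B != set0)) w e.

Definition balanced (beta : R) (A B : {set V}) : Prop :=
  (maxn #|A| #|B|)%:R <= (1 - beta) * (#|A :|: B|)%:R.

Definition bipartition (S A B : {set V}) : Prop :=
  A :|: B = S /\ A :&: B = set0.

Fixpoint bal_mincut_tree (E : {set {set V}}) (w : {set V} -> R) (beta : R)
    (t : hctree) : Prop :=
  match t with
  | HLeaf _ => True
  | HNode [:: t1; t2] =>
      [/\ balanced beta (leafset t1) (leafset t2),
          (forall A B : {set V}, bipartition (leafset t) A B ->
              balanced beta A B ->
              cut_weight E w (leafset t1) (leafset t2) <= cut_weight E w A B),
          bal_mincut_tree E w beta t1 & bal_mincut_tree E w beta t2]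
  | HNode _ => False
  end.

End HC.

(* Main.v *)
Require Import Defs.
From HB Require Import structures.
From mathcomp Require Import all_boot all_order all_algebra zify ring lra.
Import Order.TTheory GRing.Theory Num.Theory.
Set Implicit Arguments. Unset Strict Implicit. Unset Printing Implicit Defensive.
Import Order.TTheory GRing.Theory Num.Theory.

Section Tree.
Variable V : finType.
Implicit Types (t c : hctree V) (cs : seq (hctree V)) (S : {set V}).

Fixpoint hct_ind (P : hctree V -> Prop)
  (HL : forall v, P (HLeaf v))
  (HN : forall cs, (forall c, List.In c cs -> P c) -> P (HNode cs)) t : P t :=
  match t with
  | HLeaf v => HL v
  | HNode cs => HN cs
      ((fix G (l : seq (hctree V)) : forall c, List.In c l -> P c :=
          match l with
          | [::] => fun c (H : List.In c [::]) => False_ind _ H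
          | c0 :: l' => fun c (H : List.In c (c0 :: l')) =>
              match H with
              | or_introl e => eq_ind c0 P (hct_ind HL HN c0) c e
              | or_intror H' => G l' c H'
              end
          end) cs)
  end.

Lemma lca_node S cs :
  (exists c, List.In c cs /\ S \subset leafset c /\ lca_size S (HNode cs) = lca_size S c)
  \/ ((forall c, List.In c cs -> ~~ (S \subset leafset c)) /\
      lca_size S (HNode cs) = size (leaves (HNode cs))).
Proof.
rewrite /=; move: (size (flatten _)) => d.
elim: cs => [|c cs IH] /=; first by right.
case: ifP => Hc.
  by left; exists c; split; [left|].
case: IH => [[c' [H1 [H2 H3]]]|[H1 H2]].
  by left; exists c'; split; [right|].
right; split => // c0 [<-|H]; first by rewrite Hc.
exact: H1.
Qed.

Lemma In_flat c cs x : List.In c cs -> x \in leaves c -> x \in leaves (HNode cs).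
Proof.
rewrite /=; elim: cs => [|c0 cs IH] //= [<-|H] Hx; rewrite mem_cat ?Hx //.
by rewrite IH ?orbT.
Qed.

Lemma flat_In cs x : x \in leaves (HNode cs) -> exists c, List.In c cs /\ x \in leaves c.
Proof.
rewrite /=; elim: cs => [|c0 cs IH] //=; rewrite mem_cat => /orP[H|H].
  by exists c0; split; [left|].
by case: (IH H) => c [H1 H2]; exists c; split; [right|].
Qed.

Lemma uniq_child c cs : uniq (leaves (HNode cs)) -> List.In c cs -> uniq (leaves c).
Proof.
rewrite /=; elim: cs => [|c0 cs IH] //=; rewrite cat_uniq => /and3P[u1 _ u2] [<-|H] //.
exact: IH.
Qed.

Lemma size_child c cs : List.In c cs -> size (leaves c) <= size (leaves (HNode cs)).
Proof.
rewrite /=; elim: cs => [|c0 cs IH] //= [<-|H]; rewrite size_cat ?leq_addr //.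
by apply: leq_trans (IH H) _; rewrite leq_addl.
Qed.

Lemma child_uniq c1 c2 cs x : uniq (leaves (HNode cs)) -> List.In c1 cs -> List.In c2 cs ->
  x \in leaves c1 -> x \in leaves c2 -> c1 = c2.
Proof.
rewrite /=; elim: cs => [|c0 cs IH] //=; rewrite cat_uniq => /and3P[u1 hh u2].
have Hd : forall c, List.In c cs -> x \in leaves c -> x \in leaves c0 -> False.
  move=> c Hc Hx Hx0; move/hasP: hh; apply; exists x => //.
  exact: (In_flat Hc Hx).
case=> [<-|H1] [<-|H2] // X1 X2.
- by case: (Hd _ H2 X2 X1).
- by case: (Hd _ H1 X1 X2).
- exact: IH.
Qed.

Lemma leafsetE t x : (x \in leafset t) = (x \in leaves t).
Proof. by rewrite inE. Qed.

Lemma lca_child S c cs : uniq (leaves (HNode cs)) -> List.In c cs ->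
  S != set0 -> S \subset leafset c -> lca_size S (HNode cs) = lca_size S c.
Proof.
move=> U Hc /set0Pn[x Hx] Hs.
case: (lca_node S cs) => [[c' [H1 [H2 ->]]]|[H1 _]].
  have := subsetP H2 x Hx; have := subsetP Hs x Hx; rewrite !leafsetE => X1 X2.
  by rewrite (child_uniq U Hc H1 X1 X2).
by move: (H1 c Hc); rewrite Hs.
Qed.

Lemma lca_top S c cs v : uniq (leaves (HNode cs)) -> List.In c cs ->
  v \in S -> v \in leaves c -> ~~ (S \subset leafset c) ->
  lca_size S (HNode cs) = size (leaves (HNode cs)).
Proof.
move=> U Hc Hv Hvc Hn.
case: (lca_node S cs) => [[c' [H1 [H2 _]]]|[_ ->]] //.
have := subsetP H2 v Hv; rewrite leafsetE => X.
by move: Hn; rewrite (child_uniq U Hc H1 Hvc X) H2.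
Qed.

Lemma lca_le_size S t : lca_size S t <= size (leaves t).
Proof.
elim/hct_ind: t => [v|cs IH] //.
case: (lca_node S cs) => [[c [H1 [_ ->]]]|[_ ->]] //.
exact: leq_trans (IH c H1) (size_child H1).
Qed.

Lemma lca_single t u : u \in leaves t -> lca_size [set u] t <= 1.
Proof.
elim/hct_ind: t => [v|cs IH] //.
move=> Hu; case: (flat_In Hu) => c [Hc Huc].
case: (lca_node [set u] cs) => [[c' [H1 [H2 ->]]]|[H1 _]].
  by apply: IH => //; rewrite -leafsetE; apply: (subsetP H2); rewrite set11.
by move: (H1 c Hc); rewrite sub1set leafsetE Huc.
Qed.

Lemma lca_ultra t : uniq (leaves t) -> forall u v x, u \in leaves t -> v \in leaves t ->
  x \in leaves t ->
  lca_size [set u; x] t <= maxn (lca_size [set u; v] t) (lca_size [set v; x] t).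
Proof.
elim/hct_ind: t => [y|cs IH] U u v x Hu Hv Hx; first by [].
case: (flat_In Hv) => c [Hc Hvc].
have Uc := uniq_child U Hc.
have ne2 : forall a b : V, [set a; b] != set0.
  by move=> a b; apply/set0Pn; exists a; rewrite !inE eqxx.
have sub2 : forall a b, a \in leaves c -> b \in leaves c -> [set a; b] \subset leafset c.
  by move=> a b Ha Hb; apply/subsetP => z; rewrite !inE => /orP[]/eqP->.
case Huc: (u \in leaves c); case Hxc: (x \in leaves c).
- rewrite !(lca_child U Hc (ne2 _ _)) ?sub2 //.
  exact: IH.
- rewrite [lca_size [set v; x] _](lca_top U Hc (v:=v)) ?inE ?eqxx //.
    by apply: leq_trans (lca_le_size _ _) (leq_maxr _ _).
  by apply/negP => /subsetP/(_ x); rewrite !inE eqxx orbT ?leafsetE Hxc => /(_ isT).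
- rewrite [lca_size [set u; v] _](lca_top U Hc (v:=v)) ?inE ?eqxx ?orbT //.
    by apply: leq_trans (lca_le_size _ _) (leq_maxl _ _).
  by apply/negP => /subsetP/(_ u); rewrite !inE eqxx ?leafsetE Huc => /(_ isT).
- rewrite [lca_size [set u; v] _](lca_top U Hc (v:=v)) ?inE ?eqxx ?orbT //.
    by apply: leq_trans (lca_le_size _ _) (leq_maxl _ _).
  by apply/negP => /subsetP/(_ u); rewrite !inE eqxx ?leafsetE Huc => /(_ isT).
Qed.

Lemma card_leafset t : uniq (leaves t) -> #|leafset t| = size (leaves t).
Proof.
move=> U; rewrite -(card_uniqP U); apply: eq_card => x; by rewrite inE.
Qed.

Lemma lca_cluster t : uniq (leaves t) -> forall u k, u \in leaves t -> 1 <= k ->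
  #|[set v in leafset t | lca_size [set u; v] t <= k]| <= k.
Proof.
elim/hct_ind: t => [y|cs IH] U u k Hu Hk.
  apply: leq_trans (subset_leq_card (_ : _ \subset leafset (HLeaf y))) _.
    by apply/subsetP => z; rewrite inE => /andP[].
  by rewrite card_leafset.
case: (leqP (size (leaves (HNode cs))) k) => Hs.
  apply: leq_trans (subset_leq_card (_ : _ \subset leafset (HNode cs))) _.
    by apply/subsetP => z; rewrite inE => /andP[].
  by rewrite card_leafset.
case: (flat_In Hu) => c [Hc Huc].
have Uc := uniq_child U Hc.
apply: leq_trans (IH c Hc Uc u k Huc Hk).
apply: subset_leq_card; apply/subsetP => v; rewrite !inE => /andP[Hv Hl].
case Hvc: (v \in leaves c).
  rewrite -(lca_child U Hc) //.
    by apply/set0Pn; exists u; rewrite !inE eqxx.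
  by apply/subsetP => z; rewrite !inE => /orP[]/eqP->; rewrite ?Huc ?Hvc.
move: Hl; rewrite (lca_top U Hc (v:=u)) ?inE ?eqxx //; first by rewrite leqNgt Hs.
by apply/negP => /subsetP/(_ v); rewrite !inE eqxx orbT Hvc => /(_ isT).
Qed.

Section Part.
Variable T : hctree V.
Hypothesis hT : is_hctree T.

Definition rel (k : nat) (a b : V) := lca_size [set a; b] T <= k.

Lemma rel_trans k u a b : rel k u a -> rel k a b -> rel k u b.
Proof.
case: hT => _ U Hall; rewrite /rel => H1 H2.
apply: leq_trans (lca_ultra U (Hall u) (Hall a) (Hall b)) _.
by rewrite geq_max H1 H2.
Qed.

Lemma rel_refl k u : 1 <= k -> rel k u u.
Proof.
case: hT => _ _ Hall; rewrite /rel setUid => Hk.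
exact: leq_trans (lca_single (Hall u)) Hk.
Qed.

Lemma rel_card k u : 1 <= k -> #|[set v | rel k u v]| <= k.
Proof.
case: hT => _ U Hall Hk.
apply: leq_trans (lca_cluster U (Hall u) Hk).
by apply: subset_leq_card; apply/subsetP => v; rewrite !inE Hall.
Qed.

Definition closedb k S (P : {set V}) :=
  [forall a, forall b, (a \in P) && (b \in S) && rel k a b ==> (b \in P)].

Lemma closedP k S (P : {set V}) : reflect (forall a b, a \in P -> b \in S -> rel k a b -> b \in P)
  (closedb k S P).
Proof.
apply: (iffP forallP) => H.
  move=> a b Ha Hb Hr; move/forallP: (H a) => /(_ b); by rewrite Ha Hb Hr.
move=> a; apply/forallP => b; apply/implyP => /andP[/andP[Ha Hb] Hr]; exact: H Ha Hb Hr.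
Qed.

Lemma bal_part S k : 1 <= k -> 3 * k <= 2 * #|S| ->
  exists P : {set V}, [/\ P \subset S, #|S| <= 3 * #|P|, 3 * #|P| <= 2 * #|S| &
    forall a b, a \in P -> b \in S -> b \notin P -> k < lca_size [set a; b] T].
Proof.
move=> Hk Hks.
pose good (P : {set V}) := [&& P \subset S, closedb k S P & 3 * #|P| <= 2 * #|S|].
have g0 : good set0.
  apply/and3P; split; [exact: sub0set | apply/closedP => a b; by rewrite inE | by rewrite cards0].
have fin : forall P : {set V}, P \subset S -> closedb k S P -> #|S| <= 3 * #|P| -> 3 * #|P| <= 2 * #|S| ->
  exists P : {set V}, [/\ P \subset S, #|S| <= 3 * #|P|, 3 * #|P| <= 2 * #|S| &
    forall a b, a \in P -> b \in S -> b \notin P -> k < lca_size [set a; b] T].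
  move=> P H1 /closedP H2 H3 H4; exists P; split => // a b Ha Hb Hn.
  by rewrite ltnNge; apply/negP => Hr; move: Hn; rewrite (H2 a b Ha Hb Hr).
case: (@arg_maxnP _ set0 good (fun P => #|P|) g0) => P0 /and3P[s0 c0 b0] Hmax.
case: (leqP #|S| (3 * #|P0|)) => Hlt.
  by apply: (fin P0).
have [u Hu] : exists u, u \in S :\: P0.
  apply/set0Pn; apply/negP => /eqP H0.
  have := cardsD S P0; rewrite H0 cards0 (setIidPr s0) => /eqP; rewrite eq_sym subn_eq0 => H.
  have := leq_trans H (leq_pmull _ (isT : 0 < 3)); rewrite leqNgt; lia.
move: Hu; rewrite inE => /andP[uP uS].
pose B := [set v in S | rel k u v].
have cB : closedb k S B.
  apply/closedP => a b; rewrite !inE => /andP[_ Hua] Hb Hab; rewrite Hb.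
  exact: rel_trans Hua Hab.
have sB : B \subset S by apply/subsetP => v; rewrite inE => /andP[].
have kB : #|B| <= k.
  apply: leq_trans (rel_card u Hk); apply: subset_leq_card; apply/subsetP => v.
  by rewrite !inE => /andP[].
have uB : u \in B by rewrite inE uS rel_refl.
have HQ : 2 * #|S| < 3 * #|P0 :|: B|.
  rewrite ltnNge; apply/negP => HQ.
  have gQ : good (P0 :|: B).
    apply/and3P; split; [by rewrite subUset s0 sB | | by []].
    apply/closedP => a b; rewrite inE => /orP[Ha|Ha] Hb Hab.
      by rewrite inE (elimT (closedP k S P0) c0 a b Ha Hb Hab).
    by rewrite inE (elimT (closedP k S B) cB a b Ha Hb Hab) orbT.
  have := Hmax _ gQ; rewrite /geq /= leqNgt => /negP; apply.
  apply: proper_card; rewrite properE subsetUl /=.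
  by apply/subsetP => /(_ u); rewrite inE uB orbT (negbTE uP) => /(_ isT).
move: HQ; rewrite cardsU => HQ.
apply: (fin B) => //; lia.
Qed.
End Part.

Definition mm x := (2 * x) %/ 3.
Definition fl (L b : nat) : nat := \sum_(1 <= k < b.+1) (k < L).

Lemma fl_split L a b : a <= b ->
  fl L b = fl L a + \sum_(a.+1 <= k < b.+1) (k < L).
Proof. by move=> ab; rewrite /fl (@big_cat_nat _ _ _ a.+1). Qed.

Lemma flE L b : fl L b = minn L.-1 b.
Proof.
elim: b => [|b IH]; first by rewrite /fl big_geq.
rewrite /fl big_nat_recr //= -/(fl L b) IH; lia.
Qed.

Lemma sub2E (x y : V) S : ([set x; y] \subset S) = (x \in S) && (y \in S).
Proof. by rewrite subUset !sub1set. Qed.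

Lemma meet2E (x y : V) S : ([set x; y] :&: S != set0) = (x \in S) || (y \in S).
Proof.
apply/set0Pn/orP => [[z]|[H|H]].
  by rewrite !inE => /andP[/orP[]/eqP-> ->]; [left|right].
  by exists x; rewrite !inE eqxx H.
by exists y; rewrite !inE eqxx H orbT.
Qed.

Lemma disjE S1 S2 x : S1 :&: S2 = set0 -> x \in S1 -> (x \in S2) = false.
Proof.
move=> H H1; apply/negP => H2.
have : x \in S1 :&: S2 by rewrite inE H1 H2.
by rewrite H inE.
Qed.

Definition cross S1 S2 (e : {set V}) := (e :&: S1 != set0) && (e :&: S2 != set0).

Lemma cross_sub S1 S2 (e : {set V}) : #|e| = 2 -> cross S1 S2 e -> S1 :&: S2 = set0 ->
  e \subset S1 :|: S2.
Proof.
move=> /eqP /cards2P [x [y [xy ->]]]; rewrite /cross !meet2E sub2E !inE => + D.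
case x1: (x \in S1); case x2: (x \in S2); case y1: (y \in S1); case y2: (y \in S2) => //=;
  by rewrite ?(disjE D x1) in x2; rewrite ?(disjE D y1) in y2.
Qed.

Section Cost.
Variable R : realFieldType.
Variable E : {set {set V}}.
Variable w : {set V} -> R.
Hypothesis hw : wgraph E w.
Variable T : hctree V.
Hypothesis hT : is_hctree T.

Local Open Scope ring_scope.

Lemma E2 e : e \in E -> #|e| = 2%N.
Proof. by case: hw => H _; apply: H. Qed.
Lemma w0 e : e \in E -> 0 <= w e.
Proof. by case: hw => _ H; apply: H. Qed.

Lemma split3 (F : {set V} -> R) S1 S2 : S1 :&: S2 = set0 ->
  \sum_(e in E | e \subset S1 :|: S2) F e =
  \sum_(e in E | e \subset S1) F e + \sum_(e in E | e \subset S2) F e +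
  \sum_(e in E | cross S1 S2 e) F e.
Proof.
move=> D.
rewrite (bigID (fun e : {set V} => e \subset S1)) /= [X in _ + X](bigID (fun e : {set V} => e \subset S2)) /= addrA.
congr (_ + _ + _); apply: eq_bigl => e; case eE: (e \in E) => //=;
  move: (E2 eE) => /eqP /cards2P [x [y [xy ->]]];
  rewrite /cross ?meet2E !sub2E !inE;
  case x1: (x \in S1); case x2: (x \in S2); case y1: (y \in S1); case y2: (y \in S2) => //=;
  by rewrite ?(disjE D x1) in x2; rewrite ?(disjE D y1) in y2.
Qed.


Lemma balancedP (A B : {set V}) :
  balanced (1/3 : R) A B <-> (3 * maxn #|A| #|B| <= 2 * #|A :|: B|)%N.
Proof.
rewrite /balanced.
have -> : (1 - 1/3 : R) * (#|A :|: B|)%:R = (2 * #|A :|: B|)%:R / 3.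
  by rewrite natrM; field.
rewrite ler_pdivlMr ?ltr0n // -natrM ler_nat mulnC.
by split => H; lia.
Qed.


Lemma w_nonneg_sum (P : pred {set V}) (F : {set V} -> R) :
  (forall e, e \in E -> 0 <= F e) -> 0 <= \sum_(e in E | P e) w e * F e.
Proof. by move=> H; apply: sumr_ge0 => e /andP[eE _]; rewrite mulr_ge0 ?w0 ?H. Qed.

Lemma cut_ge0 A B : 0 <= cut_weight E w A B.
Proof. by apply: sumr_ge0 => e /andP[eE _]; rewrite w0. Qed.

Lemma cut_le_level (P S : {set V}) k : P \subset S ->
  (forall a b, a \in P -> b \in S -> b \notin P -> k < lca_size [set a; b] T)%N ->
  cut_weight E w P (S :\: P) <=
  \sum_(e in E | e \subset S) w e * (k < lca_size e T)%:R.
Proof.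
move=> PS Hk; rewrite /cut_weight big_mkcondr [X in _ <= X]big_mkcondr /=.
apply: ler_sum => e eE.
move: (E2 eE) => /eqP /cards2P [x [y [xy exy]]]; rewrite exy in eE *.
rewrite !meet2E !sub2E !inE.
have we := w0 eE.
have sP := subsetP PS.
have Hxy := Hk x y; have Hyx := Hk y x; rewrite setUC in Hyx.
case xP: (x \in P); case yP: (y \in P); case xS: (x \in S); case yS: (y \in S) => //=;
  rewrite ?mulr_ge0 ?ler0n //;
  try (by move: (sP _ xP); rewrite xS); try (by move: (sP _ yP); rewrite yS);
  try exact: we; try (by rewrite Hxy ?xP ?yS ?yP ?mulr1 //);
  by rewrite Hyx ?yP ?xS ?xP ?mulr1 //.
Qed.


Lemma node_ineq S S1 S2 :
  S1 :|: S2 = S -> S1 :&: S2 = set0 ->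
  (forall A B, bipartition S A B -> balanced (1/3 : R) A B ->
     cut_weight E w S1 S2 <= cut_weight E w A B) ->
  (#|S|)%:R * cut_weight E w S1 S2 <=
  9 * \sum_(e in E | e \subset S) w e *
      (\sum_((mm (mm #|S|)).+1 <= k < (mm #|S|).+1) (k < lca_size e T))%:R.
Proof.
move=> HU HD Hmin.
case: (leqP #|S| 1) => Hs.
  have -> : cut_weight E w S1 S2 = 0.
    rewrite /cut_weight big1 // => e /andP[eE Hc]; exfalso.
    have := cross_sub (E2 eE) Hc HD; rewrite HU => /subset_leq_card.
    rewrite (E2 eE); lia.
  rewrite mulr0 mulr_ge0 // w_nonneg_sum // => e _; exact: ler0n.
set s := #|S|; set a := mm (mm s); set b := mm s.
have Hk : forall k, (a < k <= b)%N -> cut_weight E w S1 S2 <=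
    \sum_(e in E | e \subset S) w e * (k < lca_size e T)%:R.
  move=> k /andP[ak kb].
  have k1 : (1 <= k)%N by lia.
  have k3 : (3 * k <= 2 * #|S|)%N by move: kb; rewrite /b /mm -/s; lia.
  have [P [PS H1 H2 Hsep]] := bal_part hT k1 k3.
  apply: le_trans (Hmin P (S :\: P) _ _) (cut_le_level PS Hsep).
    have sP := subsetP PS.
    split; apply/setP => x; rewrite !inE; case xP: (x \in P) => //=.
    by rewrite (sP _ xP).
  apply/balancedP.
  have -> : P :|: (S :\: P) = S.
    have sP := subsetP PS.
    apply/setP => x; rewrite !inE; case xP: (x \in P) => //=.
    by rewrite (sP _ xP).
  rewrite cardsD (setIidPr PS) -/s; lia.
have Hsum : (b - a)%:R * cut_weight E w S1 S2 <=
    \sum_(a.+1 <= k < b.+1) \sum_(e in E | e \subset S) w e * (k < lca_size e T)%:R.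
  rewrite mulr_natl -[(b - a)%N]subSS -sumr_const_nat.
  by apply: ler_sum_nat => k; rewrite /= ltnS => /Hk.
have HX : \sum_(a.+1 <= k < b.+1) \sum_(e in E | e \subset S) w e * (k < lca_size e T)%:R
    = \sum_(e in E | e \subset S) w e *
      (\sum_(a.+1 <= k < b.+1) (k < lca_size e T))%:R.
  rewrite exchange_big /=; apply: eq_bigr => e _.
  by rewrite natr_sum mulr_sumr.
apply: le_trans (_ : s%:R * cut_weight E w S1 S2 <= (9 * (b - a))%:R * cut_weight E w S1 S2) _.
  apply: ler_wpM2r; first exact: cut_ge0.
  rewrite ler_nat /b /a /mm; lia.
rewrite natrM -mulrA; apply: ler_wpM2l => //.
by rewrite -HX.
Qed.


Lemma ne0 e : e \in E -> e != set0.
Proof. by move=> eE; apply/negP => /eqP E0; move: (E2 eE); rewrite E0 cards0. Qed.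

Lemma tbal_bound t : bal_mincut_tree E w (1/3) t -> uniq (leaves t) ->
  \sum_(e in E | e \subset leafset t) w e * (lca_size e t)%:R <=
  9 * \sum_(e in E | e \subset leafset t) w e * (fl (lca_size e T) (mm #|leafset t|))%:R.
Proof.
elim/hct_ind: t => [v|cs IH] Hb U.
  have -> : \sum_(e in E | e \subset leafset (HLeaf v)) w e * (lca_size e (HLeaf v))%:R = 0.
    apply: big1 => e /andP[eE Hs]; exfalso.
    by have := subset_leq_card Hs; rewrite (E2 eE) card_leafset.
  by rewrite mulr_ge0 // w_nonneg_sum // => e _; exact: ler0n.
case: cs IH Hb U => [|t1 [|t2 [|t3 cs]]] IH Hb U; try by case: Hb.
case: Hb => Hbal Hmin Hb1 Hb2.
have In1 : List.In t1 [:: t1; t2] by left.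
have In2 : List.In t2 [:: t1; t2] by right; left.
have U1 := uniq_child U In1; have U2 := uniq_child U In2.
have IH1 := IH t1 In1 Hb1 U1; have IH2 := IH t2 In2 Hb2 U2.
set t := HNode [:: t1; t2] in U Hmin *.
set S := leafset t in Hmin *; set S1 := leafset t1 in Hbal Hmin IH1 *;
set S2 := leafset t2 in Hbal Hmin IH2 *.
have HU : S1 :|: S2 = S by apply/setP => x; rewrite !inE /= cats0 mem_cat.
have HD : S1 :&: S2 = set0.
  move: (U); rewrite /= cats0 cat_uniq => /and3P[_ hh _].
  apply/setP => x; rewrite !inE; apply/negP => /andP[x1 x2].
  by move/hasP: hh; apply; exists x.
have sp F := split3 F HD; rewrite HU in sp.
have eq1 : \sum_(e in E | e \subset S1) w e * (lca_size e t)%:R =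
    \sum_(e in E | e \subset S1) w e * (lca_size e t1)%:R.
  by apply: eq_bigr => e /andP[eE He]; rewrite (lca_child U In1 (ne0 eE) He).
have eq2 : \sum_(e in E | e \subset S2) w e * (lca_size e t)%:R =
    \sum_(e in E | e \subset S2) w e * (lca_size e t2)%:R.
  by apply: eq_bigr => e /andP[eE He]; rewrite (lca_child U In2 (ne0 eE) He).
have eqC : \sum_(e in E | cross S1 S2 e) w e * (lca_size e t)%:R =
    (#|S|)%:R * cut_weight E w S1 S2.
  rewrite /cut_weight mulr_sumr; apply: eq_bigr => e /andP[eE Hc].
  rewrite mulrC; congr (_ * _); congr (_%:R).
  move: Hc => /andP[/set0Pn[a Ha] /set0Pn[b Hb]].
  move: Ha Hb; rewrite !inE => /andP[ae a1] /andP[be b2].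
  rewrite (lca_top U In1 ae (v:=a)) ?card_leafset //.
  apply/negP => /subsetP/(_ b be) b1.
  have : b \in S1 :&: S2 by rewrite in_setI b1 /S2 inE b2.
  by rewrite HD inE.
rewrite sp eq1 eq2 eqC.
set a := mm (mm #|S|).
set D := fun e : {set V} => (\sum_(a.+1 <= k < (mm #|S|).+1) (k < lca_size e T)%N)%N.
have Hfl : forall e, fl (lca_size e T) (mm #|S|) = (fl (lca_size e T) a + D e)%N.
  by move=> e; rewrite /D (@fl_split _ a) // /a /mm; lia.
rewrite [X in _ <= 9 * X](eq_bigr (fun e => w e * (fl (lca_size e T) a)%:R + w e * (D e)%:R));
  last by move=> e _; rewrite Hfl natrD mulrDr.
rewrite big_split /= sp.
have Hn := node_ineq HU HD Hmin.
move/balancedP: Hbal; rewrite HU => Hbal.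
have M : forall S', (3 * #|S'| <= 2 * #|S|)%N ->
    \sum_(e in E | e \subset S') w e * (fl (lca_size e T) (mm #|S'|))%:R <=
    \sum_(e in E | e \subset S') w e * (fl (lca_size e T) a)%:R.
  move=> S' HS'; apply: ler_sum => e /andP[eE _]; apply: ler_wpM2l; first exact: w0.
  rewrite ler_nat !flE /a /mm; lia.
have M1 : (3 * #|S1| <= 2 * #|S|)%N by lia.
have M2 : (3 * #|S2| <= 2 * #|S|)%N by lia.
have := M _ M1; have := M _ M2.
have : 0 <= \sum_(e in E | cross S1 S2 e) w e * (fl (lca_size e T) a)%:R.
  by apply: w_nonneg_sum => e _; exact: ler0n.
move: Hn IH1 IH2; rewrite -/D.
lra.
Qed.

End Cost.
End Tree.

Unset Implicit Arguments.
Local Open Scope ring_scope.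

Theorem lemma2p5 (R : realFieldType) (V : finType)
    (E : {set {set V}}) (w : {set V} -> R) (Tbal : hctree V) :
  wgraph E w ->
  is_hctree Tbal ->
  bal_mincut_tree E w (1 / 3) Tbal ->
  forall T : hctree V, is_hctree T ->
    hc_cost E w Tbal <= 9 * hc_cost E w T.
Proof.
move=> hw hTb Hb T hT.
case: (hTb) => _ Ub Allb.
have Sall : forall e : {set V}, e \subset leafset Tbal.
  by move=> e; apply/subsetP => x _; rewrite inE Allb.
have H := tbal_bound hw hT Hb Ub.
rewrite /hc_cost.
have -> : \sum_(e in E) w e * (lca_size e Tbal)%:R =
    \sum_(e in E | e \subset leafset Tbal) w e * (lca_size e Tbal)%:R.
  by apply: eq_bigl => e; rewrite Sall andbT.
apply: le_trans H _; apply: ler_wpM2l => //.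
rewrite [X in _ <= X](eq_bigl (fun e => (e \in E) && (e \subset leafset Tbal)));
  last by move=> e; rewrite Sall andbT.
apply: ler_sum => e /andP[eE _]; apply: ler_wpM2l; first exact: (w0 hw eE).
rewrite ler_nat flE; lia.
Qed.
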